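(* Let $H=(V,E)$ be a finite hypergraph and $A\subset E$. Let $V_1,\dots,V_N\subset V$ be the vertex sets of the connected components of $H|_A=(V_A,A)$, and for $k=1,\dots,N$ let $E_k=\{e\in A : e\subset V_k\}$. Define $$\mathcal{V}_k=\{\tilde V\subset V_k : \tilde V\neq\emptyset \text{ and } |\tilde V\cap e| \text{ is even for all } e\in E_k\},\qquad \mathcal{U}_k=\Big\{\prod_{v\in\tilde V}\Lambda_v : \tilde V\in\mathcal{V}_k\Big\},$$ $\mathcal{U}=\bigcup_{k=1}^N\mathcal{U}_k$ and $\mathcal{Q}=\{\Lambda_v : v\in V\setminus\bigcup_{k=1}^N V_k\}$. Then $\mathcal{O}_A=\mathcal{G}(\mathcal{U}\cup\mathcal{Q})$. Moreover, if $H$ is a graph, then $\mathcal{V}_k=\{V_k\}$ for all $k=1,\dots,N$.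
   Context: A hypergraph is $H=(V,E)$ with $V$ finite and $E\subset\mathcal{P}(V)$; it is a graph if every edge has exactly two elements. Fix enumerations $E=\{e_1,\dots,e_{|E|}\}$, $V=\{v_1,\dots,v_{|V|}\}$. For $w:E\to\mathbb{Z}_2$ the physical state is $|\psi_w\rangle=|w(e_1)\cdots w(e_{|E|})\rangle$ (qubits indexed by edges). $w$ is a parity weight if there is $f:V\to\mathbb{Z}_2$ with $\overline{w(e)}=\bigoplus_{v\in e}f(v)$ for all $e\in E$, where $\overline{p}=p\oplus1$; $\Pi$ is the set of $|\psi_w\rangle$ with $w$ a parity weight. For $v\in V$, the logical line operator $\Lambda_v:\Pi\to\Pi$ sends $|\psi_w\rangle$ to $|\psi_{w'}\rangle$ where $w'(e)=\overline{w(e)}$ if $v\in e$ and $w'(e)=w(e)$ otherwise. $\mathbb{\Lambda}=\{\Lambda_v : v\in V\}\cup\{\mathbb{1}\}$. For a set $F$ of maps $\Pi\to\Pi$, $\mathcal{G}(F)$ is the set of all finite compositions of elements of $F$, the empty composition being the identity $\mathbb{1}$. For $|\psi\rangle\in\Pi$ and non-empty $B\subset E$, $|\psi\rangle_B$ denotes the restriction to the qubits indexed by $B$. $\mathcal{O}_B=\{P\in\mathcal{G}(\mathbb{\Lambda}) : (P|\psi\rangle)_B=|\psi\rangle_B\ \forall|\psi\rangle\in\Pi\}$ for non-empty $B$, and $\mathcal{O}_\emptyset=\mathcal{G}(\mathbb{\Lambda})$. $H|_A=(V_A,A)$ with $V_A=\bigcup_{e\in A}e$; its connected components are with respect to edges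 in $A$. *)

(* Defs.v *)
From mathcomp Require Import all_boot.
Set Implicit Arguments. Unset Strict Implicit. Unset Printing Implicit Defensive.

Section Hypergraph.
Variables (V : finType) (E : {set {set V}}).

(* qubits are indexed by edges of H *)
Definition edge := {e : {set V} | e \in E}.
(* a weight w : E -> Z_2 (Z_2 = bool with xor); |psi_w> is identified with w *)
Definition state := edge -> bool.

Definition xorsum (S : {set V}) (f : V -> bool) : bool :=
  \big[addb/false]_(u in S) f u.

Definition parity_weight (w : state) : Prop :=
  exists f : V -> bool, forall e : edge, ~~ w e = xorsum (val e) f.

Definition Pi := {w : state | parity_weight w}.

Definition flipw (v : V) (w : state) : state :=
  fun e => if v \in val e then ~~ w e else w e.

Lemma xorsum_flip (S : {set V}) (f : V -> bool) (v : V) :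
  xorsum S (fun u => if u == v then ~~ f u else f u) = (v \in S) (+) xorsum S f.
Proof.
rewrite /xorsum; case: (boolP (v \in S)) => vS.
- rewrite (bigD1 v vS) /= eqxx [in RHS](bigD1 v vS) /=.
  rewrite (eq_bigr f); last by move=> u /andP [_ /negbTE ->].
  by case: (f v); case: (\big[addb/false]_(i in S | i != v) f i).
- apply: eq_bigr => u uS; case: eqP => // uv; by rewrite -uv uS in vS.
Qed.

Lemma flipw_parity (v : V) (w : state) :
  parity_weight w -> parity_weight (flipw v w).
Proof.
move=> [f Hf]; exists (fun u => if u == v then ~~ f u else f u) => e.
rewrite xorsum_flip -Hf /flipw; by case: (v \in val e); case: (w e).
Qed.

Definition Lam (v : V) : Pi -> Pi :=
  fun p => exist _ (flipw v (proj1_sig p)) (flipw_parity v (proj2_sig p)).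

Definition Op := Pi -> Pi.

Definition gen (F : Op -> Prop) (P : Op) : Prop :=
  exists s : seq Op, foldr (fun g acc => F g /\ acc) True s /\ P = foldr (fun g h => g \o h) id s.

Definition LamSet (g : Op) : Prop := (exists v, g = Lam v) \/ g = id.

(* (P|psi>)_B = |psi>_B : agreement on the qubits indexed by B *)
Definition restr_eq (B : {set {set V}}) (p q : Pi) : Prop :=
  forall e : edge, val e \in B -> proj1_sig p e = proj1_sig q e.

(* O_B ; for B empty this is G(Lambda) *)
Definition Obs (B : {set {set V}}) (P : Op) : Prop :=
  gen LamSet P /\ (B != set0 -> forall p : Pi, restr_eq B (P p) p).

(* product of Lambda_v over v in S (they commute, order irrelevant) *)
Definition prodLam (S : {set V}) : Op :=
  foldr (fun v g => Lam v \o g) id (enum S).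

Definition is_graph : Prop := forall e, e \in E -> #|e| = 2.

End Hypergraph.

Definition adjA (V : finType) (A : {set {set V}}) : rel V :=
  fun u v => [exists e in A, (u \in e) && (v \in e)].

Definition VA (V : finType) (A : {set {set V}}) : {set V} := \bigcup_(e in A) e.

Definition components (V : finType) (A : {set {set V}}) : {set {set V}} :=
  [set [set v | connect (adjA A) u v] | u in VA A].

Definition Ek (V : finType) (A : {set {set V}}) (C : {set V}) : {set {set V}} :=
  [set e in A | e \subset C].

Definition calV (V : finType) (A : {set {set V}}) (C : {set V}) : {set {set V}} :=
  [set S : {set V} | [&& S != set0, S \subset C &
                        [forall e in Ek A C, ~~ odd #|S :&: e|]]].

Definition calU (V : finType) (E A : {set {set V}}) (g : Op E) : Prop :=
  exists2 C, C \in components A & exists2 S, S \in calV A C & g = @prodLam V E S.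

Definition calQ (V : finType) (E A : {set {set V}}) (g : Op E) : Prop :=
  exists2 v, v \notin \bigcup_(C in components A) C & g = @Lam V E v.

(* Main.v *)
Require Import Defs.
From mathcomp Require Import all_boot.
From Stdlib Require Import FunctionalExtensionality ProofIrrelevance.
Set Warnings "-notation-overridden".

Set Implicit Arguments. Unset Strict Implicit. Unset Printing Implicit Defensive.

Lemma xorsum_card (V:finType) (S T : {set V}) :
  xorsum S (fun u => u \in T) = odd #|T :&: S|.
Proof.
rewrite /xorsum.
have -> : #|T :&: S| = \sum_(u in S) (u \in T).
  rewrite -sum1_card [LHS]big_mkcond [RHS]big_mkcond /=.
  apply: eq_bigr => u _; rewrite inE; by case: (u \in T); case: (u \in S).
rewrite (big_morph odd oddD (erefl : odd 0 = false)).
by apply: eq_bigr => u _; case: (u \in T).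
Qed.

Section Proof.
Variables (V : finType) (E : {set {set V}}).

Definition eff (P : Op E) (t : V -> bool) : Prop :=
  forall (p : Pi E) (e : edge E), proj1_sig (P p) e = xorsum (val e) t (+) proj1_sig p e.

Lemma xorsum0 (S : {set V}) : xorsum S (fun _ => false) = false.
Proof. by rewrite /xorsum big1. Qed.

Lemma xorsumD (S : {set V}) f g :
  xorsum S (fun u => f u (+) g u) = xorsum S f (+) xorsum S g.
Proof. by rewrite /xorsum big_split. Qed.

Lemma xorsum_ext (S : {set V}) f g : f =1 g -> xorsum S f = xorsum S g.
Proof. by move=> fg; rewrite /xorsum; apply: eq_bigr. Qed.

Lemma xorsum1 (S : {set V}) v : xorsum S (fun u => u == v) = (v \in S).
Proof.
have := xorsum_flip S (fun _ => false) v; rewrite xorsum0 addbF => <-.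
by apply: xorsum_ext => u; case: eqP.
Qed.

Lemma eff_id : eff id (fun _ => false).
Proof. by move=> p e; rewrite xorsum0. Qed.

Lemma eff_Lam v : eff (Lam v) (fun u => u == v).
Proof.
move=> p e; rewrite xorsum1 /= /flipw.
by case: (v \in val e); case: (proj1_sig p e).
Qed.

Lemma eff_comp (P Q : Op E) t s :
  eff P t -> eff Q s -> eff (P \o Q) (fun u => t u (+) s u).
Proof. move=> hP hQ p e; by rewrite /= hP hQ xorsumD addbA. Qed.

Lemma eff_ext (P : Op E) t s : eff P t -> t =1 s -> eff P s.
Proof. move=> hP ts p e; rewrite hP; congr (_ (+) _); exact: xorsum_ext. Qed.

Lemma eff_uniq (P Q : Op E) t s : eff P t -> eff Q s -> t =1 s -> P = Q.
Proof.
move=> hP hQ ts; apply: functional_extensionality => p.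
have H : proj1_sig (P p) = proj1_sig (Q p).
  apply: functional_extensionality => e; rewrite hP hQ; congr (_ (+) _).
  exact: xorsum_ext.
move: (P p) (Q p) H => [x hx] [y hy] /= H; subst y; f_equal.
apply: proof_irrelevance.
Qed.

Lemma foldr_compE (s : seq (Op E)) (X : Op E) :
  foldr (fun g h => g \o h) X s = foldr (fun g h => g \o h) id s \o X.
Proof. by elim: s => //= g s ->. Qed.

Lemma gen_id (F : Op E -> Prop) : gen F id.
Proof. by exists [::]. Qed.

Lemma gen1 (F : Op E -> Prop) g : F g -> gen F g.
Proof. by move=> Fg; exists [:: g]. Qed.

Lemma gen_comp (F : Op E -> Prop) P Q : gen F P -> gen F Q -> gen F (P \o Q).
Proof.
move=> [s [hs ->]] [r [hr ->]]; exists (s ++ r); split.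
  by elim: s hs => //= g s IH [? ?]; split; auto.
by rewrite foldr_cat [in RHS](foldr_compE s).
Qed.

Lemma gen_sub (F G : Op E -> Prop) P :
  (forall g, F g -> gen G g) -> gen F P -> gen G P.
Proof.
move=> FG [s [hs ->]]; elim: s hs => /= [_|g s IH [Fg hs]]; first exact: gen_id.
exact: gen_comp (FG _ Fg) (IH hs).
Qed.

Lemma gen_ind (F : Op E -> Prop) (Q : Op E -> Prop) P :
  Q id -> (forall g h, F g -> Q h -> Q (g \o h)) -> gen F P -> Q P.
Proof.
move=> Q0 QS [s [hs ->]]; elim: s hs => //= g s IH [Fg hs]; exact: QS (IH hs).
Qed.

Lemma gen_effP (F : Op E -> Prop) (G : (V -> bool) -> Prop) P :
  G (fun _ => false) -> (forall t s, G t -> G s -> G (fun u => t u (+) s u)) ->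
  (forall g, F g -> exists2 t, eff g t & G t) -> gen F P -> exists2 t, eff P t & G t.
Proof.
move=> G0 GD HF; apply: (@gen_ind F (fun P => exists2 t, eff P t & G t)).
- exists (fun _ => false); [exact: eff_id | exact: G0].
- move=> g h /HF [t gt tg] [s hs sg]; exists (fun u => t u (+) s u).
  + exact: eff_comp.
  + exact: GD.
Qed.

Lemma eff_prodLam (S : {set V}) : eff (@prodLam V E S) (fun u => u \in S).
Proof.
rewrite /prodLam; apply: (@eff_ext _ (fun u => odd (count_mem u (enum S)))).
  elim: (enum S) => /= [|v s IH]; first exact: eff_id.
  apply: eff_ext (eff_comp (eff_Lam v) IH) _ => u.
  by rewrite oddD eq_sym; case: (v == u).
by move=> u; rewrite count_uniq_mem ?enum_uniq // mem_enum; case: (u \in S).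
Qed.

Lemma gen_prodLam (F : Op E -> Prop) (S : {set V}) :
  (forall v, v \in S -> F (Lam v)) -> gen F (@prodLam V E S).
Proof.
rewrite /prodLam => H.
have : forall v, v \in enum S -> F (Lam v) by move=> v; rewrite mem_enum; apply: H.
elim: (enum S) => /= [|v s IH] Hs; first exact: gen_id.
apply: gen_comp; first by apply: gen1; apply: Hs; rewrite inE eqxx.
by apply: IH => u us; apply: Hs; rewrite inE us orbT.
Qed.

Variable A : {set {set V}}.
Hypothesis hA : A \subset E.

Lemma adjA_sym : symmetric (adjA A).
Proof.
move=> x y; rewrite /adjA; apply/existsP/existsP => -[e /and3P [eA xe ye]];
  exists e; by rewrite eA xe ye.
Qed.

Definition comp u := [set v | connect (adjA A) u v].

Lemma connect_symA : connect_sym (adjA A).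
Proof. exact: sym_connect_sym adjA_sym. Qed.

Lemma compsP C : reflect (exists2 u, u \in VA A & C = comp u) (C \in components A).
Proof. exact: imsetP. Qed.

Lemma VAP v : reflect (exists2 e, e \in A & v \in e) (v \in VA A).
Proof. exact: bigcupP. Qed.

Lemma closed_VA : closed (adjA A) (VA A).
Proof.
move=> x y /existsP [e /and3P [eA xe ye]].
have -> : x \in VA A by apply/VAP; exists e.
have -> : y \in VA A by apply/VAP; exists e.
done.
Qed.

Lemma comp_VA C v : C \in components A -> v \in C -> v \in VA A.
Proof.
move=> /compsP [u uV ->]; rewrite inE => cuv.
by rewrite -(closed_connect closed_VA cuv).
Qed.

Lemma comp_self u : u \in comp u.
Proof. by rewrite inE connect0. Qed.

Lemma comp_in u : u \in VA A -> comp u \in components A.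
Proof. by move=> uV; apply/compsP; exists u. Qed.

Lemma comp_eq C u : C \in components A -> u \in C -> C = comp u.
Proof.
move=> /compsP [u0 _ ->]; rewrite inE => c0u; apply/setP => v; rewrite !inE.
apply/idP/idP => h.
- rewrite connect_symA in c0u; exact: connect_trans c0u h.
- exact: connect_trans c0u h.
Qed.

Lemma edge_sub C e x :
  C \in components A -> e \in A -> x \in e -> x \in C -> e \subset C.
Proof.
move=> /compsP [u0 _ ->] eA xe; rewrite inE => c0x; apply/subsetP => y ye.
rewrite inE; apply: connect_trans c0x (connect1 _); apply/existsP; exists e.
by rewrite eA xe ye.
Qed.

Definition good (t : V -> bool) := forall e, e \in A -> xorsum e t = false.

Lemma restr_good (P : Op E) t :
  eff P t -> (forall p, restr_eq A (P p) p) <-> good t.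
Proof.
move=> hP; split.
- move=> H e eA.
  pose w : state E := fun _ => true.
  have pw : parity_weight w by exists (fun _ => false) => ee; rewrite xorsum0.
  have := H (exist _ w pw) (exist _ e (subsetP hA _ eA)) eA.
  by rewrite hP /=; case: (xorsum e t).
- by move=> g p e eA; rewrite hP g.
Qed.

Lemma good0 : good (fun _ => false).
Proof. by move=> e _; rewrite xorsum0. Qed.

Lemma goodD t s : good t -> good s -> good (fun u => t u (+) s u).
Proof. by move=> ht hs e eA; rewrite xorsumD ht ?hs. Qed.

Lemma calU_good (g : Op E) : calU A g -> exists2 t, eff g t & good t.
Proof.
move=> [C hC [S hS ->]]; exists (fun u => u \in S); first exact: eff_prodLam.
move: hS; rewrite /calV inE => /and3P [_ SC /forall_inP HS] e eA.
rewrite xorsum_card; case: (boolP (e \subset C)) => eC.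
- apply/negbTE; apply: HS; by rewrite /Ek inE eA eC.
- have -> : S :&: e = set0.
    apply/setP => x; rewrite !inE; apply/negP => /andP [xS xe].
    by move: eC; rewrite (edge_sub hC eA xe (subsetP SC _ xS)).
  by rewrite cards0.
Qed.

Lemma calQ_good (g : Op E) : calQ A g -> exists2 t, eff g t & good t.
Proof.
move=> [v hv ->]; exists (fun u => u == v); first exact: eff_Lam.
move=> e eA; rewrite xorsum1; apply/negP => ve.
have vV : v \in VA A by apply/VAP; exists e.
case/negP: hv; apply/bigcupP; exists (comp v); [exact: comp_in | exact: comp_self].
Qed.

Lemma RHS_LamSet (g : Op E) : calU A g \/ calQ A g -> gen (@LamSet V E) g.
Proof.
case=> [[C hC [S hS ->]] | [v hv ->]].
- apply: gen_prodLam => v _; left; by exists v.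
- apply: gen1; left; by exists v.
Qed.

Lemma RHS_LHS (P : Op E) : gen (fun g => calU A g \/ calQ A g) P -> Obs A P.
Proof.
move=> hP; split; first exact: gen_sub RHS_LamSet hP.
move=> _; have [t et gt] : exists2 t, eff P t & good t.
  apply: gen_effP hP; [exact: good0 | exact: goodD |].
  move=> g [] ; [exact: calU_good | exact: calQ_good].
exact: (restr_good et).2 gt.
Qed.

Lemma LHS_RHS (P : Op E) : Obs A P -> gen (fun g => calU A g \/ calQ A g) P.
Proof.
move=> [hg hr].
have [t et _] : exists2 t, eff P t & True.
  apply: (gen_effP (G := fun _ => True)) hg => //.
  move=> g [[v ->]| ->].
  + exists (fun u => u == v) => //; exact: eff_Lam.
  + exists (fun _ => false) => //; exact: eff_id.
have gt : good t.
  case: (eqVneq A set0) => [A0 | An]; first by move=> e; rewrite A0 inE.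
  exact: (restr_good et).1 (hr An).
pose T := [set u | t u].
pose Q1 := foldr (fun g h => g \o h) id
             [seq @prodLam V E (T :&: C) | C <- enum (components A)].
have eQ1 : forall r, eff (foldr (fun g h => g \o h) id [seq @prodLam V E (T :&: C) | C <- r])
   (fun u => \big[addb/false]_(C <- r) (u \in T :&: C)).
  elim => /= [|C r IH]; first by apply: eff_ext eff_id _ => u; rewrite big_nil.
  by apply: eff_ext (eff_comp (eff_prodLam _) IH) _ => u; rewrite big_cons.
have -> : P = Q1 \o @prodLam V E (T :\: VA A).
  apply: eff_uniq et (eff_comp (eQ1 _) (eff_prodLam _)) _ => u /=.
  rewrite big_enum /=.
  case: (boolP (u \in VA A)) => uV.
  - rewrite (bigD1 (comp u)) ?comp_in //= big1.
      by rewrite !inE connect0 uV; case: (t u).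
    move=> C /andP [hC ne]; rewrite inE; apply/negbTE/andP => -[_ uC].
    by move: ne; rewrite (comp_eq hC uC) eqxx.
  - rewrite big1; first by rewrite !inE (negbTE uV); case: (t u).
    move=> C hC; rewrite inE; apply/negbTE/andP => -[_ uC].
    by rewrite (comp_VA hC uC) in uV.
apply: gen_comp.
- rewrite /Q1.
  have : forall C, C \in enum (components A) -> C \in components A.
    by move=> C; rewrite mem_enum.
  elim: (enum _) => /= [|C r IH] Hr; first exact: gen_id.
  apply: gen_comp; last by apply: IH => D Dr; apply: Hr; rewrite inE Dr orbT.
  have hC : C \in components A by apply: Hr; rewrite inE eqxx.
  case: (eqVneq (T :&: C) set0) => [->|ne].
  + rewrite /prodLam enum_set0 /=; exact: gen_id.
  + apply: gen1; left; exists C => //; exists (T :&: C) => //.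
    rewrite /calV inE ne subsetIr /=; apply/forall_inP => e.
    rewrite /Ek inE => /andP [eA eC].
    rewrite -setIA (setIidPr eC) -xorsum_card.
    have -> : xorsum e (fun u => u \in T) = xorsum e t.
      by apply: xorsum_ext => u; rewrite inE.
    by rewrite gt.
- apply: gen_prodLam => v; rewrite inE => /andP [vV _]; right; exists v => //.
  apply/bigcupP => -[C hC vC]; by rewrite (comp_VA hC vC) in vV.
Qed.

Lemma graph_part (hG : is_graph E) C : C \in components A -> calV A C = [set C].
Proof.
move=> hC; have [u0 u0V defC] := compsP _ hC.
apply/setP => S; rewrite /calV !inE.
apply/idP/idP.
- case/and3P => /set0Pn [x xS] SC /forall_inP HS.
  have step : forall y z, y \in S -> adjA A y z -> z \in S.
    move=> y z yS /existsP [e /and3P [eA ye ze]].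
    have eC : e \subset C := edge_sub hC eA ye (subsetP SC _ yS).
    have He : e \in Ek A C by rewrite /Ek inE eA eC.
    have oh := HS e He; have e2 : #|e| = 2 := hG e (subsetP hA _ eA).
    have le : #|S :&: e| <= 2 by rewrite -e2 subset_leq_card // subsetIr.
    have gt0 : 0 < #|S :&: e| by apply/card_gt0P; exists y; rewrite inE yS ye.
    have eq2 : #|S :&: e| = 2.
      by move: le gt0 oh; case: #|S :&: e| => [|[|[|n]]].
    have Se : S :&: e = e.
      by apply/eqP; rewrite eqEcard subsetIr eq2 e2 leqnn.
    have : z \in S :&: e by rewrite Se.
    by rewrite inE => /andP [].
  have cl : closed (adjA A) S.
    move=> y z yz; apply/idP/idP => h; first exact: step yz.
    by apply: step h _; rewrite adjA_sym.
  apply/eqP/setP => v; rewrite defC inE; apply/idP/idP => [vS|c0v].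
  + by have := subsetP SC _ vS; rewrite defC inE.
  + have x0 : connect (adjA A) x u0.
      by rewrite connect_symA; have := subsetP SC _ xS; rewrite defC inE.
    by rewrite -(closed_connect cl (connect_trans x0 c0v)).
- move/eqP => ->; rewrite subxx /=; apply/andP; split.
  + apply/set0Pn; exists u0; by rewrite defC comp_self.
  + apply/forall_inP => e; rewrite /Ek inE => /andP [eA eC].
    by rewrite (setIidPr eC) (hG e (subsetP hA _ eA)).
Qed.

End Proof.

Theorem lemma1 (V : finType) (E A : {set {set V}}) (hA : A \subset E) :
  (forall P : Op E,
      Obs A P <-> gen (fun g => calU A g \/ calQ A g) P)
  /\ (is_graph E -> forall C, C \in components A -> calV A C = [set C]).
Proof.
split; last exact: graph_part.
move=> P; split; [exact: LHS_RHS | exact: RHS_LHS].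
Qed.
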